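(* Let $\mathcal{C}$ be a DC circuit whose elements are ideal DC voltage sources, resistors (with positive finite resistances), capacitors and/or inductors, with arbitrary topology, and suppose $\mathcal{C}$ is in a DC steady state. Let $\mathcal{C}^+$ be the circuit obtained from $\mathcal{C}$ by adding one new link consisting of a resistor with positive resistance between two nodes of $\mathcal{C}$, and suppose $\mathcal{C}^+$ is also in a DC steady state. Let $\mathrm{Loss}'$ and $\mathrm{Loss}$ denote the total steady-state resistive losses $\sum I^2R$ (sum over all resistors) of $\mathcal{C}$ and $\mathcal{C}^+$ respectively. Then $\mathrm{Loss}\ge\mathrm{Loss}'$; that is, the steady-state Loss Cost of the Link $\mathrm{LCL}=\mathrm{Loss}/\mathrm{Loss}'$ satisfies $\mathrm{LCL}\ge1$.
   Context: A circuit is modeled as a finite graph whose nodes are points where two or more circuit elements meet and whose links each carry one element. In a DC steady state, node potentials and branch currents satisfy Kirchhoff's current and voltage laws, each resistor obeys Ohm's law $V=IR$, each voltage source imposes a fixed potential difference across its link, each capacitor carries zero current (acts as an open circuit), and each inductor has zero voltage drop (acts as a short circuit). The Loss Cost of the Link (LCL) is the ratio of the total network resistive loss after adding a link to the total network resistive loss before adding it. *)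

(* Defs.v *)
From HB Require Import structures.
From mathcomp Require Import all_boot all_order all_algebra.
From mathcomp Require Import reals.
Set Implicit Arguments. Unset Strict Implicit. Unset Printing Implicit Defensive.
Import Order.TTheory GRing.Theory Num.Theory.
Local Open Scope ring_scope.

Inductive element (R : Type) :=
| VSource of R      (* ideal DC voltage source: potential(src) - potential(dst) = E *)
| Resistor of R
| Capacitor
| Inductor.

Arguments Capacitor {R}.
Arguments Inductor {R}.

(* A circuit: a finite multigraph with node type V and link type L; every link
   has two endpoints (an orientation, used only to fix sign conventions) and
   carries one element. *)
Record circuit (R : Type) (V L : finType) := Circuit {
  src : L -> V;
  dst : L -> V;
  elem : L -> element R
}.

Definition pos_resistances (R : realType) (V L : finType) (c : circuit R V L) :=
  forall l r, elem c l = Resistor r -> 0 < r.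

(* KVL is automatic
   since voltages are differences of node potentials. *)
Definition steady_state (R : realType) (V L : finType) (c : circuit R V L)
    (phi : V -> R) (I : L -> R) : Prop :=
  (forall n : V, \sum_(l | src c l == n) I l = \sum_(l | dst c l == n) I l) /\
  (forall l : L,
     match elem c l with
     | VSource e => phi (src c l) - phi (dst c l) = e
     | Resistor r => phi (src c l) - phi (dst c l) = I l * r
     | Capacitor => I l = 0
     | Inductor => phi (src c l) - phi (dst c l) = 0
     end).

Definition loss (R : realType) (V L : finType) (c : circuit R V L) (I : L -> R) : R :=
  \sum_(l : L) match elem c l with
               | Resistor r => I l ^+ 2 * r
               | _ => 0
               end.

(* The circuit C^+ : C with one new link (indexed by None) carrying a resistor
   of resistance r between nodes u and v. *)
Definition add_link (R : Type) (V L : finType) (c : circuit R V L) (u v : V) (r : R)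
  : circuit R V (option L) :=
  {| src := fun l => if l is Some l' then src c l' else u;
     dst := fun l => if l is Some l' then dst c l' else v;
     elem := fun l => if l is Some l' then elem c l' else Resistor r |}.

(* Main.v *)
Require Import Defs.
From HB Require Import structures.
From mathcomp Require Import all_boot all_order all_algebra.
From mathcomp Require Import reals.
From mathcomp Require Import ring.
Import Order.TTheory GRing.Theory Num.Theory.
Local Open Scope ring_scope.

Lemma big_opt (R : nmodType) (T : finType) (F : option T -> R) :
  \sum_(x : option T) F x = F None + \sum_(x : T) F (Some x).
Proof.
rewrite (bigD1 None) //=; congr (_ + _).
rewrite (reindex_omap Some id) //=; last by case.
by apply: eq_bigl => j; rewrite eqxx.
Qed.

Lemma tellegen (R : realType) (V L : finType) (s t : L -> V) (I : L -> R) (d : V -> R) :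
  (forall n : V, \sum_(l | s l == n) I l = \sum_(l | t l == n) I l) ->
  \sum_l I l * (d (s l) - d (t l)) = 0.
Proof.
move=> K.
have E : forall f : L -> V, \sum_l I l * d (f l) = \sum_n d n * \sum_(l | f l == n) I l.
  move=> f; rewrite (partition_big f predT) //=.
  apply: eq_bigr => n _; rewrite big_distrr /=; apply: eq_bigr => l /eqP <-.
  by rewrite mulrC.
under eq_bigr do rewrite mulrBr.
rewrite sumrB E E; apply/eqP; rewrite subr_eq0; apply/eqP.
by apply: eq_bigr => n _; rewrite K.
Qed.

Theorem proposition5 (R : realType) (V L : finType) (c : circuit R V L)
    (u v : V) (r : R) (phi : V -> R) (I : L -> R)
    (phi' : V -> R) (I' : option L -> R) :
  pos_resistances c -> 0 < r -> u != v ->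
  steady_state c phi I ->
  steady_state (add_link c u v r) phi' I' ->
  loss c I <= loss (add_link c u v r) I'.
Proof.
move=> Hpos Hr _ [K1 O1] [_ O2].
set d := fun n => phi' n - phi n.
have T := @tellegen _ _ _ _ _ _ d K1.
rewrite /loss big_opt /=.
apply: (@le_trans _ _ (\sum_l match elem c l with
               | Resistor r0 => I' (Some l) ^+ 2 * r0
               | _ => 0 end)); last first.
  by rewrite lerDr mulr_ge0 // ?sqr_ge0 // ltW.
have -> : \sum_l match elem c l with | Resistor r0 => I l ^+ 2 * r0 | _ => 0 end
  = \sum_l (match elem c l with | Resistor r0 => I l ^+ 2 * r0 | _ => 0 end
            + 2 * (I l * (d (src c l) - d (dst c l)))).
  by rewrite big_split /= -mulr_sumr T mulr0 addr0.
apply: ler_sum => l _.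
have := O1 l; have := O2 (Some l); have := Hpos l; rewrite /d /=.
have Ed : phi' (src c l) - phi (src c l) - (phi' (dst c l) - phi (dst c l))
   = (phi' (src c l) - phi' (dst c l)) - (phi (src c l) - phi (dst c l)) by ring.
rewrite Ed.
case: (elem c l) => [e|r0||] /=.
- by move=> _ -> ->; rewrite subrr !mulr0 addr0.
- move=> /(_ r0 erefl) Hr0 -> ->.
  rewrite -subr_ge0.
  have -> : I' (Some l) ^+ 2 * r0 - (I l ^+ 2 * r0 + 2 * (I l * (I' (Some l) * r0 - I l * r0)))
     = (I' (Some l) - I l) ^+ 2 * r0 by ring.
  by rewrite mulr_ge0 // ?sqr_ge0 // ltW.
- by move=> _ _ ->; rewrite !mul0r mulr0 addr0.
- by move=> _ -> ->; rewrite subrr !mulr0 addr0.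
Qed.
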